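(* Let $X,Y$ be $\mathfrak{Q}$-preordered $\mathfrak{Q}$-subsets. (1) Every $\mathfrak{Q}$-polarity from $X$ to $Y$ (i.e. $\mathfrak{Q}$-Galois connection $f\dashv g$ with $f\colon\mathsf{P}X\to\mathsf{P}^{\dagger}Y$, $g\colon\mathsf{P}^{\dagger}Y\to\mathsf{P}X$) is of the form $\phi_{\uparrow}\dashv\phi^{\downarrow}$ for some $\mathfrak{Q}$-distributor $\phi$ from $X$ to $Y$. (2) Every $\mathfrak{Q}$-axiality from $X$ to $Y$ (i.e. $\mathfrak{Q}$-Galois connection $f\dashv g$ with $f\colon\mathsf{P}X\to\mathsf{P}Y$, $g\colon\mathsf{P}Y\to\mathsf{P}X$) is of the form $\phi^{*}\dashv\phi_{*}$ for some $\mathfrak{Q}$-distributor $\phi$ from $Y$ to $X$. (3) Every dual $\mathfrak{Q}$-axiality from $X$ to $Y$ (i.e. $\mathfrak{Q}$-Galois connection $f\dashv g$ with $f\colon\mathsf{P}^{\dagger}X\to\mathsf{P}^{\dagger}Y$, $g\colon\mathsf{P}^{\dagger}Y\to\mathsf{P}^{\dagger}X$) is of the form $\phi_{\dagger}\dashv\phi^{\dagger}$ for some $\mathfrak{Q}$-distributor $\phi$ from $Y$ to $X$.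
   Context: $(\mathfrak{Q},\&,e)$ is a non-trivial unital quantale (complete lattice with associative multiplication with unit $e$ preserving joins in each variable, $\bot<e$), implications $p\& q\le r\iff p\le r/ q\iff q\le p\backslash r$, $\mathcal{D}\mathfrak{Q}(p,q)=\{u\mid (u/ p)\& p=u=q\&(q\backslash u)\}$. A $\mathfrak{Q}$-subset is a set $X$ with $|\cdot|\colon X\to\mathfrak{Q}$; $\mathbf{1}_q$ is $\{*\}$ with $|*|=q$. A $\mathfrak{Q}$-relation from $X$ to $Y$ is a map $\phi\colon X\times Y\to\mathfrak{Q}$ with $\phi(x,y)\in\mathcal{D}\mathfrak{Q}(|x|,|y|)$, ordered pointwise; composition $(\psi\circ\phi)(x,z)=\bigvee_y(\psi(y,z)/|y|)\&\phi(x,y)$; $\xi\swarrow\phi$ is the largest $\psi'$ with $\psi'\circ\phi\le\xi$ and $\psi\searrow\xi$ the largest $\phi'$ with $\psi\circ\phi'\le\xi$. A $\mathfrak{Q}$-preordered $\mathfrak{Q}$-subset is a $\mathfrak{Q}$-subset $X$ with a $\mathfrak{Q}$-relation $1_X^{\natural}$ on $X$ with $\mathrm{id}_X\le 1_X^{\natural}$ ($\mathrm{id}_X(x,x)=|x|$, else $\bot$) and $1_X^{\natural}\circ 1_X^{\natural}\le 1_X^{\natural}$. A $\mathfrak{Q}$-order-preserving map $h\colon A\to B$ satisfies $|ha|=|a|$ and $1_A^{\natural}(a,a')\le 1_B^{\natural}(ha,ha')$; $h\le k$ means $|a|\le 1_B^{\natural}(ha,ka)$ for all $a$; a $\mathfrak{Q}$-Galois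 connection $h\dashv k$ ($h\colon A\to B$, $k\colon B\to A$ $\mathfrak{Q}$-order-preserving) means $1_A\le kh$ and $hk\le 1_B$. A $\mathfrak{Q}$-distributor from $X$ to $Y$ is a $\mathfrak{Q}$-relation $\phi$ with $1_Y^{\natural}\circ\phi\circ 1_X^{\natural}\le\phi$. $\mathsf{P}X$ consists of $\mathfrak{Q}$-relations $\mu$ from $X$ to some $\mathbf{1}_q$ with $\mu\circ 1_X^{\natural}\le\mu$, $|\mu|=q$, $\mathfrak{Q}$-preorder $1_{\mathsf{P}X}^{\natural}(\mu,\mu')=\mu'\swarrow\mu$; $\mathsf{P}^{\dagger}X$ consists of $\mathfrak{Q}$-relations $\lambda$ from some $\mathbf{1}_q$ to $X$ with $1_X^{\natural}\circ\lambda\le\lambda$, $|\lambda|=q$, $1_{\mathsf{P}^{\dagger}X}^{\natural}(\lambda,\lambda')=\lambda'\searrow\lambda$. For a $\mathfrak{Q}$-distributor $\phi$ from $A$ to $B$: $\phi_{\uparrow}\mu=\phi\swarrow\mu$ ($\mathsf{P}A\to\mathsf{P}^{\dagger}B$), $\phi^{\downarrow}\lambda'=\lambda'\searrow\phi$ ($\mathsf{P}^{\dagger}B\to\mathsf{P}A$), $\phi^{*}\mu'=\mu'\circ\phi$ ($\mathsf{P}B\to\mathsf{P}A$), $\phi_{*}\mu=\mu\swarrow\phi$ ($\mathsf{P}A\to\mathsf{P}B$), $\phi_{\dagger}\lambda'=\phi\searrow\lambda'$ ($\mathsf{P}^{\dagger}B\to\mathsf{P}^{\dagger}A$), $\phi^{\dagger}\lambda=\phi\circ\lambda$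 ($\mathsf{P}^{\dagger}A\to\mathsf{P}^{\dagger}B$). *)

(* Defs.v *)
Set Implicit Arguments.
Unset Strict Implicit.

Record Quantale := {
  qcar :> Type;
  qle : qcar -> qcar -> Prop;
  qle_refl : forall a, qle a a;
  qle_antisym : forall a b, qle a b -> qle b a -> a = b;
  qle_trans : forall a b c, qle a b -> qle b c -> qle a c;
  qsup : (qcar -> Prop) -> qcar;
  qsup_ub : forall (S : qcar -> Prop) a, S a -> qle a (qsup S);
  qsup_least : forall (S : qcar -> Prop) b,
      (forall a, S a -> qle a b) -> qle (qsup S) b;
  qmul : qcar -> qcar -> qcar;
  qe : qcar;
  qmul_assoc : forall a b c, qmul a (qmul b c) = qmul (qmul a b) c;
  qmul_e_l : forall a, qmul qe a = a;
  qmul_e_r : forall a, qmul a qe = a;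
  qmul_sup_r : forall a (S : qcar -> Prop),
      qmul a (qsup S) = qsup (fun c => exists b, S b /\ c = qmul a b);
  qmul_sup_l : forall a (S : qcar -> Prop),
      qmul (qsup S) a = qsup (fun c => exists b, S b /\ c = qmul b a);
  qnontrivial : qsup (fun _ => False) <> qe
}.

Section QDefs.
Variable Q : Quantale.

Definition qbot : Q := qsup (fun _ : Q => False).

(* right implication  r / q  :  p & q <= r  <->  p <= r / q *)
Definition rimp (r q : Q) : Q := qsup (fun p => qle (qmul p q) r).
(* left implication  p \ r  :  p & q <= r  <->  q <= p \ r *)
Definition limp (p r : Q) : Q := qsup (fun q => qle (qmul p q) r).

Definition inDQ (p q u : Q) : Prop :=
  qmul (rimp u p) p = u /\ u = qmul q (limp q u).

(** Q-relations between Q-subsets (A, dA) and (B, dB):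
    maps phi : A -> B -> Q with phi a b \in DQ(|a|,|b|). *)
Definition Qrel (A B : Type) (dA : A -> Q) (dB : B -> Q) (phi : A -> B -> Q)
  : Prop := forall a b, inDQ (dA a) (dB b) (phi a b).

Definition rel_le (A B : Type) (phi psi : A -> B -> Q) : Prop :=
  forall a b, qle (phi a b) (psi a b).

Definition rcomp (X Y Z : Type) (dY : Y -> Q)
  (psi : Y -> Z -> Q) (phi : X -> Y -> Q) : X -> Z -> Q :=
  fun x z => qsup (fun r => exists y, r = qmul (rimp (psi y z) (dY y)) (phi x y)).

(* identity relation: id(x,x) = |x|, id(x,y) = bot otherwise *)
Definition rid (X : Type) (dX : X -> Q) : X -> X -> Q :=
  fun x y => qsup (fun r => x = y /\ r = dX x).

(* xi <- phi (written  xi \swarrow phi): the largest Q-relation psi' from B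
   to C with psi' o phi <= xi, for phi : A -> B, xi : A -> C;
   realised as the pointwise join of all such psi'. *)
Definition lres (A B C : Type) (dA : A -> Q) (dB : B -> Q) (dC : C -> Q)
  (xi : A -> C -> Q) (phi : A -> B -> Q) : B -> C -> Q :=
  fun b c => qsup (fun r => exists psi', Qrel dB dC psi' /\
                      rel_le (rcomp dB psi' phi) xi /\ r = psi' b c).

(* psi -> xi (written  psi \searrow xi): the largest Q-relation phi' from A
   to B with psi o phi' <= xi, for psi : B -> C, xi : A -> C. *)
Definition rres (A B C : Type) (dA : A -> Q) (dB : B -> Q) (dC : C -> Q)
  (psi : B -> C -> Q) (xi : A -> C -> Q) : A -> B -> Q :=
  fun a b => qsup (fun r => exists phi', Qrel dA dB phi' /\
                      rel_le (rcomp dB psi phi') xi /\ r = phi' a b).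

End QDefs.

Record QPO (Q : Quantale) := {
  qpo_car :> Type;
  qdeg : qpo_car -> Q;
  qpre : qpo_car -> qpo_car -> Q;
  qpre_rel : Qrel qdeg qdeg qpre;
  qpre_refl : rel_le (rid qdeg) qpre;
  qpre_trans : rel_le (rcomp qdeg qpre qpre) qpre
}.

Arguments qdeg {Q} _ _.
Arguments qpre {Q} _ _ _.

Section Presheaves.
Variable Q : Quantale.

Definition done (q : Q) : unit -> Q := fun _ => q.

(** P X : Q-relations mu from X to some 1_q with mu o 1_X <= mu, |mu| = q *)
Record PX (X : QPO Q) := {
  px_deg : Q;
  px_rel : X -> unit -> Q;
  px_isrel : Qrel (qdeg X) (done px_deg) px_rel;
  px_dist : rel_le (rcomp (qdeg X) px_rel (qpre X)) px_rel
}.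

(** P^dagger X : Q-relations lam from some 1_q to X with 1_X o lam <= lam *)
Record PdX (X : QPO Q) := {
  pdx_deg : Q;
  pdx_rel : unit -> X -> Q;
  pdx_isrel : Qrel (done pdx_deg) (qdeg X) pdx_rel;
  pdx_dist : rel_le (rcomp (qdeg X) (qpre X) pdx_rel) pdx_rel
}.

Definition PX_pre (X : QPO Q) (m m' : PX X) : Q :=
  lres (qdeg X) (done (px_deg m)) (done (px_deg m'))
       (px_rel m') (px_rel m) tt tt.

Definition PdX_pre (X : QPO Q) (l l' : PdX X) : Q :=
  rres (done (pdx_deg l)) (done (pdx_deg l')) (qdeg X)
       (pdx_rel l') (pdx_rel l) tt tt.

Definition qorder_preserving (A B : Type) (dA : A -> Q) (dB : B -> Q)
  (rA : A -> A -> Q) (rB : B -> B -> Q) (h : A -> B) : Prop :=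
  (forall a, dB (h a) = dA a) /\
  (forall a a', qle (rA a a') (rB (h a) (h a'))).

Definition qmap_le (A B : Type) (dA : A -> Q) (rB : B -> B -> Q)
  (h k : A -> B) : Prop := forall a, qle (dA a) (rB (h a) (k a)).

Definition qgalois (A B : Type) (dA : A -> Q) (dB : B -> Q)
  (rA : A -> A -> Q) (rB : B -> B -> Q) (h : A -> B) (k : B -> A) : Prop :=
  qorder_preserving dA dB rA rB h /\ qorder_preserving dB dA rB rA k /\
  qmap_le dA rA (fun a => a) (fun a => k (h a)) /\
  qmap_le dB rB (fun b => h (k b)) (fun b => b).

Definition qdistributor (X Y : QPO Q) (phi : X -> Y -> Q) : Prop :=
  Qrel (qdeg X) (qdeg Y) phi /\
  rel_le (rcomp (qdeg Y) (qpre Y) (rcomp (qdeg X) phi (qpre X))) phi.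

(** The six maps induced by a Q-distributor phi from A to B, given on the
    level of underlying Q-relations (the degree is the one of the argument). *)
(* phi_up mu = phi \swarrow mu   : P A -> P^dagger B *)
Definition dist_up (A B : QPO Q) (phi : A -> B -> Q) (m : PX A)
  : unit -> B -> Q :=
  lres (qdeg A) (done (px_deg m)) (qdeg B) phi (px_rel m).
(* phi^down lam' = lam' \searrow phi   : P^dagger B -> P A *)
Definition dist_down (A B : QPO Q) (phi : A -> B -> Q) (l : PdX B)
  : A -> unit -> Q :=
  rres (qdeg A) (done (pdx_deg l)) (qdeg B) (pdx_rel l) phi.
(* phi^* mu' = mu' o phi   : P B -> P A *)
Definition dist_ustar (A B : QPO Q) (phi : A -> B -> Q) (m : PX B)
  : A -> unit -> Q :=
  rcomp (qdeg B) (px_rel m) phi.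
(* phi_* mu = mu \swarrow phi   : P A -> P B *)
Definition dist_lstar (A B : QPO Q) (phi : A -> B -> Q) (m : PX A)
  : B -> unit -> Q :=
  lres (qdeg A) (qdeg B) (done (px_deg m)) (px_rel m) phi.
(* phi_dagger lam' = phi \searrow lam'   : P^dagger B -> P^dagger A *)
Definition dist_ldag (A B : QPO Q) (phi : A -> B -> Q) (l : PdX B)
  : unit -> A -> Q :=
  rres (done (pdx_deg l)) (qdeg A) (qdeg B) phi (pdx_rel l).
(* phi^dagger lam = phi o lam   : P^dagger A -> P^dagger B *)
Definition dist_udag (A B : QPO Q) (phi : A -> B -> Q) (l : PdX A)
  : unit -> B -> Q :=
  rcomp (qdeg A) phi (pdx_rel l).

End Presheaves.

Arguments px_deg {Q X} _.
Arguments px_rel {Q X} _ _ _.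
Arguments pdx_deg {Q X} _.
Arguments pdx_rel {Q X} _ _ _.

(* Main.v *)
Require Import Defs.
From Stdlib Require Import Setoid.

Lemma sup2 {Q : Quantale} {a b : Q} : qle a b -> qsup (fun x => x = a \/ x = b) = b.
Proof.
  intro H. apply qle_antisym.
  - apply qsup_least. intros x [-> | ->]; [exact H | apply qle_refl].
  - apply qsup_ub. right; reflexivity.
Qed.

Lemma mul_mono_l {Q : Quantale} (a b c : Q) : qle a b -> qle (qmul a c) (qmul b c).
Proof.
  intro H. rewrite <- (sup2 H). rewrite qmul_sup_l. apply qsup_ub.
  exists a. split; [left; reflexivity | reflexivity].
Qed.

Lemma mul_mono_r {Q : Quantale} (a b c : Q) : qle a b -> qle (qmul c a) (qmul c b).
Proof.
  intro H. rewrite <- (sup2 H). rewrite qmul_sup_r. apply qsup_ub.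
  exists a. split; [left; reflexivity | reflexivity].
Qed.

Lemma rimp_spec {Q : Quantale} (p q r : Q) : qle (qmul p q) r <-> qle p (rimp r q).
Proof.
  split; intro H.
  - unfold rimp. apply qsup_ub. exact H.
  - apply qle_trans with (qmul (rimp r q) q). apply mul_mono_l; exact H.
    unfold rimp. rewrite qmul_sup_l. apply qsup_least. intros x [b [Hb ->]]. exact Hb.
Qed.

Lemma limp_spec {Q : Quantale} (p q r : Q) : qle (qmul p q) r <-> qle q (limp p r).
Proof.
  split; intro H.
  - unfold limp. apply qsup_ub. exact H.
  - apply qle_trans with (qmul p (limp p r)). apply mul_mono_r; exact H.
    unfold limp. rewrite qmul_sup_r. apply qsup_least. intros x [b [Hb ->]]. exact Hb.
Qed.

Lemma rimp_mul_le {Q : Quantale} (r q : Q) : qle (qmul (rimp r q) q) r.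
Proof. apply rimp_spec, qle_refl. Qed.

Lemma limp_mul_le {Q : Quantale} (p r : Q) : qle (qmul p (limp p r)) r.
Proof. apply limp_spec, qle_refl. Qed.

Lemma rimp_mono {Q : Quantale} (r r' q : Q) : qle r r' -> qle (rimp r q) (rimp r' q).
Proof. intro H. apply rimp_spec. eapply qle_trans; [apply rimp_mul_le | exact H]. Qed.

Lemma limp_mono {Q : Quantale} (p r r' : Q) : qle r r' -> qle (limp p r) (limp p r').
Proof. intro H. apply (proj1 (limp_spec _ _ _)). eapply qle_trans; [apply limp_mul_le | exact H]. Qed.

Lemma e_le_rimp {Q : Quantale} (p : Q) : qle (qe Q) (rimp p p).
Proof. apply (proj1 (rimp_spec _ _ _)). rewrite qmul_e_l. apply qle_refl. Qed.

Definition ldq {Q : Quantale} (p u : Q) := qmul (rimp u p) p = u.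
Definition rdq {Q : Quantale} (p u : Q) := u = qmul p (limp p u).
Definition cmpq {Q : Quantale} (p c a : Q) := qmul (rimp c p) a.

Lemma switch {Q : Quantale} {p x c : Q} : ldq p x -> rdq p c -> cmpq p x c = qmul x (limp p c).
Proof.
  unfold ldq, rdq, cmpq. intros Hx Hc. rewrite Hc at 1. rewrite qmul_assoc, Hx. reflexivity.
Qed.

Lemma ldq_cmpq {Q : Quantale} {p b : Q} (q' a : Q) : ldq p b -> ldq p (cmpq q' a b).
Proof.
  unfold ldq, cmpq. intro Hb. apply qle_antisym. apply rimp_mul_le.
  assert (E : qmul (rimp a q') b = qmul (qmul (rimp a q') (rimp b p)) p)
    by (rewrite <- qmul_assoc, Hb; reflexivity).
  rewrite E at 1. apply mul_mono_l. apply (proj1 (rimp_spec _ _ _)). rewrite <- E. apply qle_refl.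
Qed.

Lemma rdq_cmpq {Q : Quantale} {q' r a b : Q} : ldq q' a -> rdq q' b -> rdq r a -> rdq r (cmpq q' a b).
Proof.
  intros Ha Hb Hr. unfold rdq. rewrite (switch Ha Hb). unfold rdq in Hr. apply qle_antisym.
  - rewrite Hr at 1. rewrite <- qmul_assoc. apply mul_mono_r. apply (proj1 (limp_spec _ _ _)).
    rewrite qmul_assoc, <- Hr. apply qle_refl.
  - apply limp_mul_le.
Qed.

Lemma cmpq_DQ {Q : Quantale} {p q r a b : Q} : inDQ q r a -> inDQ p q b -> inDQ p r (cmpq q a b).
Proof.
  intros [Ha1 Ha2] [Hb1 Hb2]. split.
  - exact (ldq_cmpq q a Hb1).
  - exact (rdq_cmpq Ha1 Hb2 Ha2).
Qed.

Lemma cmpq_assoc {Q : Quantale} (q q' a b c : Q) : ldq q b -> rdq q c ->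
  cmpq q (cmpq q' a b) c = cmpq q' a (cmpq q b c).
Proof.
  intros Hb Hc. rewrite (switch (ldq_cmpq q' a Hb) Hc), (switch Hb Hc).
  unfold cmpq. rewrite qmul_assoc. reflexivity.
Qed.

Lemma cmpq_mono_l {Q : Quantale} (p c c' a : Q) : qle c c' -> qle (cmpq p c a) (cmpq p c' a).
Proof. intro H. apply mul_mono_l, rimp_mono, H. Qed.

Lemma cmpq_mono_r {Q : Quantale} (p c a a' : Q) : qle a a' -> qle (cmpq p c a) (cmpq p c a').
Proof. intro H. apply mul_mono_r, H. Qed.

Lemma cmpq_unit_l {Q : Quantale} (p c a : Q) : qle p c -> qle a (cmpq p c a).
Proof.
  intro H. unfold cmpq. rewrite <- (qmul_e_l a) at 1. apply mul_mono_l.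
  eapply qle_trans; [apply e_le_rimp | apply rimp_mono, H].
Qed.

Lemma cmpq_unit_r {Q : Quantale} (p w u : Q) : ldq p w -> qle p u -> qle w (cmpq p w u).
Proof.
  intros Hw H. unfold cmpq. unfold ldq in Hw. rewrite <- Hw at 1. apply mul_mono_r, H.
Qed.

Lemma ldq_refl {Q : Quantale} (p : Q) : ldq p p.
Proof.
  unfold ldq. apply qle_antisym. apply rimp_mul_le.
  rewrite <- (qmul_e_l p) at 1. apply mul_mono_l, e_le_rimp.
Qed.

Lemma rdq_refl {Q : Quantale} (p : Q) : rdq p p.
Proof.
  unfold rdq. apply qle_antisym.
  - rewrite <- (qmul_e_r p) at 1. apply mul_mono_r. apply (proj1 (limp_spec _ _ _)). rewrite qmul_e_r. apply qle_refl.
  - apply limp_mul_le.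
Qed.

Lemma inDQ_refl {Q : Quantale} (p : Q) : inDQ p p p.
Proof. split; [apply ldq_refl | apply rdq_refl]. Qed.

Lemma cmpq_id_r {Q : Quantale} (p w : Q) : ldq p w -> cmpq p w p = w.
Proof. intro H; exact H. Qed.

Lemma cmpq_id_l {Q : Quantale} (p a : Q) : rdq p a -> cmpq p p a = a.
Proof. intro H. rewrite (switch (ldq_refl p) H). symmetry; exact H. Qed.

Lemma ldq_sup {Q : Quantale} {p : Q} {S : Q -> Prop} : (forall s, S s -> ldq p s) -> ldq p (qsup S).
Proof.
  intro H. unfold ldq. apply qle_antisym. apply rimp_mul_le.
  apply qsup_least. intros s Hs. pose proof (H s Hs) as E; unfold ldq in E; rewrite <- E at 1.
  apply mul_mono_l, rimp_mono, qsup_ub, Hs.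
Qed.

Lemma rdq_sup {Q : Quantale} {p : Q} {S : Q -> Prop} : (forall s, S s -> rdq p s) -> rdq p (qsup S).
Proof.
  intro H. unfold rdq. apply qle_antisym.
  - apply qsup_least. intros s Hs. pose proof (H s Hs) as E; unfold rdq in E; rewrite E at 1.
    apply mul_mono_r, limp_mono, qsup_ub, Hs.
  - apply limp_mul_le.
Qed.

Lemma inDQ_sup {Q : Quantale} (p q : Q) (S : Q -> Prop) : (forall s, S s -> inDQ p q s) -> inDQ p q (qsup S).
Proof.
  intro H. split.
  - apply ldq_sup. intros s Hs. exact (proj1 (H s Hs)).
  - apply rdq_sup. intros s Hs. exact (proj2 (H s Hs)).
Qed.

Lemma cmpq_sup_r_le {Q : Quantale} (p c : Q) (S : Q -> Prop) (X : Q) :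
  (forall s, S s -> qle (cmpq p c s) X) -> qle (cmpq p c (qsup S)) X.
Proof.
  intro H. unfold cmpq. rewrite qmul_sup_r. apply qsup_least. intros r [s [Hs ->]]. apply H, Hs.
Qed.

Lemma cmpq_sup_l_le {Q : Quantale} (p : Q) (S : Q -> Prop) (a X : Q) :
  (forall s, S s -> ldq p s) -> rdq p a ->
  (forall s, S s -> qle (cmpq p s a) X) -> qle (cmpq p (qsup S) a) X.
Proof.
  intros H1 Ha H. rewrite (switch (ldq_sup H1) Ha). rewrite qmul_sup_l.
  apply qsup_least. intros r [s [Hs ->]]. rewrite <- (switch (H1 s Hs) Ha). apply H, Hs.
Qed.

Lemma rcomp_le {Q : Quantale} {X Y Z : Type} (dY : Y -> Q) (psi : Y -> Z -> Q) (phi : X -> Y -> Q) x z (M : Q) :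
  (forall y, qle (cmpq (dY y) (psi y z) (phi x y)) M) -> qle (rcomp dY psi phi x z) M.
Proof. intro H. unfold rcomp. apply qsup_least. intros r [y ->]. apply H. Qed.

Lemma rcomp_ge {Q : Quantale} {X Y Z : Type} (dY : Y -> Q) (psi : Y -> Z -> Q) (phi : X -> Y -> Q) x y z :
  qle (cmpq (dY y) (psi y z) (phi x y)) (rcomp dY psi phi x z).
Proof. unfold rcomp. apply qsup_ub. exists y. reflexivity. Qed.

Lemma rcomp_DQ {Q : Quantale} {X Y Z : Type} (dX : X -> Q) (dY : Y -> Q) (dZ : Z -> Q)
  (psi : Y -> Z -> Q) (phi : X -> Y -> Q) :
  Qrel dY dZ psi -> Qrel dX dY phi -> Qrel dX dZ (rcomp dY psi phi).
Proof.
  intros Hpsi Hphi x z. apply inDQ_sup. intros s [y ->].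
  exact (cmpq_DQ (Hpsi y z) (Hphi x y)).
Qed.

Lemma rcomp_right_closed {Q : Quantale} {X Y Z : Type} (dX : X -> Q) (dY : Y -> Q) (dZ : Z -> Q)
  (psi : Y -> Z -> Q) (phi : X -> Y -> Q) (rho : X -> X -> Q) :
  Qrel dY dZ psi -> Qrel dX dY phi -> Qrel dX dX rho ->
  (forall x x' y, qle (cmpq (dX x') (phi x' y) (rho x x')) (phi x y)) ->
  rel_le (rcomp dX (rcomp dY psi phi) rho) (rcomp dY psi phi).
Proof.
  intros Hpsi Hphi Hrho H x z. apply rcomp_le. intro x'.
  apply cmpq_sup_l_le.
  - intros s [y ->]. apply ldq_cmpq. exact (proj1 (Hphi x' y)).
  - exact (proj2 (Hrho x x')).
  - intros s [y ->]. change (qle (cmpq (dX x') (cmpq (dY y) (psi y z) (phi x' y)) (rho x x'))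
                              (rcomp dY psi phi x z)).
    rewrite cmpq_assoc by (exact (proj1 (Hphi x' y)) || exact (proj2 (Hrho x x'))).
    eapply qle_trans; [apply cmpq_mono_r, H | apply rcomp_ge].
Qed.

Lemma rcomp_left_closed {Q : Quantale} {U Y X : Type} (dU : U -> Q) (dY : Y -> Q) (dX : X -> Q)
  (phi : Y -> X -> Q) (lam : U -> Y -> Q) (rho : X -> X -> Q) :
  Qrel dY dX phi -> Qrel dU dY lam ->
  (forall y x x', qle (cmpq (dX x') (rho x' x) (phi y x')) (phi y x)) ->
  rel_le (rcomp dX rho (rcomp dY phi lam)) (rcomp dY phi lam).
Proof.
  intros Hphi Hlam H u x. apply rcomp_le. intro x'.
  apply cmpq_sup_r_le. intros s [y ->].
  change (qle (cmpq (dX x') (rho x' x) (cmpq (dY y) (phi y x') (lam u y))) (rcomp dY phi lam u x)).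
  rewrite <- cmpq_assoc by (exact (proj1 (Hphi y x')) || exact (proj2 (Hlam u y))).
  eapply qle_trans; [apply cmpq_mono_l, H | apply rcomp_ge].
Qed.

Lemma lres_DQ {Q : Quantale} {A B C : Type} (dA : A -> Q) (dB : B -> Q) (dC : C -> Q)
  (xi : A -> C -> Q) (phi : A -> B -> Q) b c :
  inDQ (dB b) (dC c) (lres dA dB dC xi phi b c).
Proof. apply inDQ_sup. intros s [psi' [Hq [_ ->]]]. apply Hq. Qed.

Lemma lres_pt_ge {Q : Quantale} {A B C : Type} (dA : A -> Q) (dB : B -> Q) (dC : C -> Q)
  (xi : A -> C -> Q) (phi : A -> B -> Q) a b c :
  Qrel dA dB phi ->
  qle (cmpq (dB b) (lres dA dB dC xi phi b c) (phi a b)) (xi a c).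
Proof.
  intro Hphi. unfold lres. apply cmpq_sup_l_le.
  - intros s [psi' [Hq [_ ->]]]. exact (proj1 (Hq b c)).
  - exact (proj2 (Hphi a b)).
  - intros s [psi' [Hq [Hle ->]]]. eapply qle_trans; [apply rcomp_ge | apply Hle].
Qed.

Lemma lres_pt_le {Q : Quantale} {A B C : Type} (dA : A -> Q) (dB : B -> Q) (dC : C -> Q)
  (xi : A -> C -> Q) (phi : A -> B -> Q) b0 c0 (v : Q) :
  Qrel dA dB phi -> inDQ (dB b0) (dC c0) v ->
  (forall a, qle (cmpq (dB b0) v (phi a b0)) (xi a c0)) ->
  qle v (lres dA dB dC xi phi b0 c0).
Proof.
  intros Hphi Hv H.
  pose (psi := fun b c => qsup (fun r => b = b0 /\ c = c0 /\ r = v)).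
  unfold lres. apply qle_trans with (psi b0 c0).
  - apply qsup_ub. auto.
  - apply qsup_ub. exists psi. split; [|split; [|reflexivity]].
    + intros b c. apply inDQ_sup. intros s [-> [-> ->]]. exact Hv.
    + intros a c. apply rcomp_le. intro b. apply cmpq_sup_l_le.
      * intros s [-> [-> ->]]. exact (proj1 Hv).
      * exact (proj2 (Hphi a b)).
      * intros s [-> [-> ->]]. apply H.
Qed.

Lemma rres_DQ {Q : Quantale} {A B C : Type} (dA : A -> Q) (dB : B -> Q) (dC : C -> Q)
  (psi : B -> C -> Q) (xi : A -> C -> Q) a b :
  inDQ (dA a) (dB b) (rres dA dB dC psi xi a b).
Proof. apply inDQ_sup. intros s [phi' [Hq [_ ->]]]. apply Hq. Qed.

Lemma rres_pt_ge {Q : Quantale} {A B C : Type} (dA : A -> Q) (dB : B -> Q) (dC : C -> Q)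
  (psi : B -> C -> Q) (xi : A -> C -> Q) a b c :
  qle (cmpq (dB b) (psi b c) (rres dA dB dC psi xi a b)) (xi a c).
Proof.
  unfold rres. apply cmpq_sup_r_le.
  intros s [phi' [Hq [Hle ->]]]. eapply qle_trans; [apply rcomp_ge | apply Hle].
Qed.

Lemma rres_pt_le {Q : Quantale} {A B C : Type} (dA : A -> Q) (dB : B -> Q) (dC : C -> Q)
  (psi : B -> C -> Q) (xi : A -> C -> Q) a0 b0 (v : Q) :
  inDQ (dA a0) (dB b0) v ->
  (forall c, qle (cmpq (dB b0) (psi b0 c) v) (xi a0 c)) ->
  qle v (rres dA dB dC psi xi a0 b0).
Proof.
  intros Hv H.
  pose (phi := fun a b => qsup (fun r => a = a0 /\ b = b0 /\ r = v)).
  unfold rres. apply qle_trans with (phi a0 b0).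
  - apply qsup_ub. auto.
  - apply qsup_ub. exists phi. split; [|split; [|reflexivity]].
    + intros a b. apply inDQ_sup. intros s [-> [-> ->]]. exact Hv.
    + intros a c. apply rcomp_le. intro b. apply cmpq_sup_r_le.
      intros s [-> [-> ->]]. apply H.
Qed.

Definition EP {Q : Quantale} {T : Type} (d : T -> Q) (r : T -> T -> Q) : Prop :=
  (forall a b, inDQ (d a) (d b) (r a b)) /\ (forall a, qle (d a) (r a a)) /\
  (forall a b c, qle (cmpq (d b) (r b c) (r a b)) (r a c)).

Lemma hom_iso {Q : Quantale} {A B : Type} (dA : A -> Q) (dB : B -> Q) (rA : A -> A -> Q) (rB : B -> B -> Q)
  (f : A -> B) (g : B -> A) :
  EP dA rA -> EP dB rB -> qgalois dA dB rA rB f g -> forall a b, rB (f a) b = rA a (g b).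
Proof.
  intros [A1 [A2 A3]] [B1 [B2 B3]] [[Fd Fm] [[Gd Gm] [Un Cn]]] a b.
  apply qle_antisym.
  - eapply qle_trans; [apply Gm|].
    eapply qle_trans; [|apply (A3 a (g (f a)) (g b))].
    apply cmpq_unit_r. exact (proj1 (A1 _ _)).
    rewrite Gd, Fd. apply Un.
  - eapply qle_trans; [apply Fm|].
    eapply qle_trans; [|apply (B3 (f a) (f (g b)) b)].
    apply cmpq_unit_l. rewrite Fd, Gd. apply Cn.
Qed.

Lemma qpre_refl' {Q : Quantale} (X : QPO Q) (x : X) : qle (qdeg X x) (qpre X x x).
Proof.
  eapply qle_trans; [|apply (qpre_refl (q:=X) x x)]. unfold rid. apply qsup_ub. auto.
Qed.

Lemma sigma_isrel {Q : Quantale} (X : QPO Q) (x : X) :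
  Qrel (qdeg X) (done (qdeg X x)) (fun a (_ : unit) => qpre X a x).
Proof. intros a u. exact (qpre_rel (q:=X) a x). Qed.

Lemma sigma_dist {Q : Quantale} (X : QPO Q) (x : X) :
  rel_le (rcomp (qdeg X) (fun a (_ : unit) => qpre X a x) (qpre X)) (fun a _ => qpre X a x).
Proof. intros a u. exact (qpre_trans (q:=X) a x). Qed.

Definition sigma {Q : Quantale} (X : QPO Q) (x : X) : PX X :=
  {| px_deg := qdeg X x; px_rel := fun a _ => qpre X a x;
     px_isrel := sigma_isrel X x; px_dist := sigma_dist X x |}.

Lemma tau_isrel {Q : Quantale} (X : QPO Q) (x : X) :
  Qrel (done (qdeg X x)) (qdeg X) (fun (_ : unit) a => qpre X x a).
Proof. intros u a. exact (qpre_rel (q:=X) x a). Qed.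

Lemma tau_dist {Q : Quantale} (X : QPO Q) (x : X) :
  rel_le (rcomp (qdeg X) (qpre X) (fun (_ : unit) a => qpre X x a)) (fun _ a => qpre X x a).
Proof. intros u a. exact (qpre_trans (q:=X) x a). Qed.

Definition tau {Q : Quantale} (X : QPO Q) (x : X) : PdX X :=
  {| pdx_deg := qdeg X x; pdx_rel := fun _ a => qpre X x a;
     pdx_isrel := tau_isrel X x; pdx_dist := tau_dist X x |}.

Lemma PX_DQ {Q : Quantale} {X : QPO Q} (m m' : PX X) : inDQ (px_deg m) (px_deg m') (PX_pre m m').
Proof. exact (lres_DQ (qdeg X) (done (px_deg m)) (done (px_deg m')) (px_rel m') (px_rel m) tt tt). Qed.

Lemma PX_ge {Q : Quantale} {X : QPO Q} (m m' : PX X) a :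
  qle (cmpq (px_deg m) (PX_pre m m') (px_rel m a tt)) (px_rel m' a tt).
Proof. exact (lres_pt_ge (qdeg X) (done (px_deg m)) (done (px_deg m')) (px_rel m') (px_rel m) a tt tt (px_isrel m)). Qed.

Lemma PX_le {Q : Quantale} {X : QPO Q} (m m' : PX X) v :
  inDQ (px_deg m) (px_deg m') v ->
  (forall a, qle (cmpq (px_deg m) v (px_rel m a tt)) (px_rel m' a tt)) ->
  qle v (PX_pre m m').
Proof. intros Hv H. exact (lres_pt_le (qdeg X) (done (px_deg m)) (done (px_deg m')) (px_rel m') (px_rel m) tt tt v (px_isrel m) Hv H). Qed.

Lemma PdX_DQ {Q : Quantale} {X : QPO Q} (l l' : PdX X) : inDQ (pdx_deg l) (pdx_deg l') (PdX_pre l l').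
Proof. exact (rres_DQ (done (pdx_deg l)) (done (pdx_deg l')) (qdeg X) (pdx_rel l') (pdx_rel l) tt tt). Qed.

Lemma PdX_ge {Q : Quantale} {X : QPO Q} (l l' : PdX X) c :
  qle (cmpq (pdx_deg l') (pdx_rel l' tt c) (PdX_pre l l')) (pdx_rel l tt c).
Proof. exact (rres_pt_ge (done (pdx_deg l)) (done (pdx_deg l')) (qdeg X) (pdx_rel l') (pdx_rel l) tt tt c). Qed.

Lemma PdX_le {Q : Quantale} {X : QPO Q} (l l' : PdX X) v :
  inDQ (pdx_deg l) (pdx_deg l') v ->
  (forall c, qle (cmpq (pdx_deg l') (pdx_rel l' tt c) v) (pdx_rel l tt c)) ->
  qle v (PdX_pre l l').
Proof. intros Hv H. exact (rres_pt_le (done (pdx_deg l)) (done (pdx_deg l')) (qdeg X) (pdx_rel l') (pdx_rel l) tt tt v Hv H). Qed.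

Lemma Y1 {Q : Quantale} {X : QPO Q} (x : X) (m : PX X) : PX_pre (sigma X x) m = px_rel m x tt.
Proof.
  apply qle_antisym.
  - eapply qle_trans; [|apply (PX_ge (sigma X x) m x)].
    apply cmpq_unit_r. exact (proj1 (PX_DQ _ _)). apply qpre_refl'.
  - apply PX_le. exact (px_isrel m x tt).
    intro a. eapply qle_trans; [|apply (px_dist m a tt)]. apply (rcomp_ge (qdeg X) (px_rel m) (qpre X) a x tt).
Qed.

Lemma Y2 {Q : Quantale} {X : QPO Q} (y : X) (l : PdX X) : PdX_pre l (tau X y) = pdx_rel l tt y.
Proof.
  apply qle_antisym.
  - eapply qle_trans; [|apply (PdX_ge l (tau X y) y)].
    apply cmpq_unit_l. apply qpre_refl'.
  - apply PdX_le. exact (pdx_isrel l tt y).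
    intro c. eapply qle_trans; [|apply (pdx_dist l tt c)]. apply (rcomp_ge (qdeg X) (qpre X) (pdx_rel l) tt y c).
Qed.

Lemma EP_PX {Q : Quantale} (X : QPO Q) : EP (@px_deg Q X) (@PX_pre Q X).
Proof.
  split; [|split].
  - apply PX_DQ.
  - intro m. apply PX_le. apply inDQ_refl.
    intro a. rewrite cmpq_id_l. apply qle_refl. exact (proj2 (px_isrel m a tt)).
  - intros m m' m''. apply PX_le.
    + exact (cmpq_DQ (PX_DQ m' m'') (PX_DQ m m')).
    + intro a. rewrite cmpq_assoc by (exact (proj1 (PX_DQ m m')) || exact (proj2 (px_isrel m a tt))).
      eapply qle_trans; [apply cmpq_mono_r, PX_ge | apply PX_ge].
Qed.

Lemma EP_PdX {Q : Quantale} (X : QPO Q) : EP (@pdx_deg Q X) (@PdX_pre Q X).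
Proof.
  split; [|split].
  - apply PdX_DQ.
  - intro l. apply PdX_le. apply inDQ_refl.
    intro c. rewrite cmpq_id_r. apply qle_refl. exact (proj1 (pdx_isrel l tt c)).
  - intros l l' l''. apply PdX_le.
    + exact (cmpq_DQ (PdX_DQ l' l'') (PdX_DQ l l')).
    + intro c. rewrite <- cmpq_assoc by (exact (proj1 (PdX_DQ l' l'')) || exact (proj2 (PdX_DQ l l'))).
      eapply qle_trans; [apply cmpq_mono_l, PdX_ge | apply PdX_ge].
Qed.

Lemma dist_sides {Q : Quantale} (X Y : QPO Q) (phi : X -> Y -> Q) :
  (forall a a' b, qle (cmpq (qdeg X a') (phi a' b) (qpre X a a')) (phi a b)) ->
  (forall a b b', qle (cmpq (qdeg Y b') (qpre Y b' b) (phi a b')) (phi a b)) ->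
  rel_le (rcomp (qdeg Y) (qpre Y) (rcomp (qdeg X) phi (qpre X))) phi.
Proof.
  intros H1 H2 a b. apply rcomp_le. intro b'.
  eapply qle_trans; [|apply (H2 a b b')]. apply cmpq_mono_r.
  apply rcomp_le. intro a'. apply H1.
Qed.

Lemma part1 {Q : Quantale} (X Y : QPO Q) (f : PX X -> PdX Y) (g : PdX Y -> PX X) :
  qgalois (@px_deg Q X) (@pdx_deg Q Y) (@PX_pre Q X) (@PdX_pre Q Y) f g ->
  exists phi : X -> Y -> Q, qdistributor phi /\
    (forall m, pdx_deg (f m) = px_deg m /\ forall u y, pdx_rel (f m) u y = dist_up phi m u y) /\
    (forall l, px_deg (g l) = pdx_deg l /\ forall x u, px_rel (g l) x u = dist_down phi l x u).
Proof.
  intro G.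
  pose proof (hom_iso _ _ _ _ f g (EP_PX X) (EP_PdX Y) G) as hom.
  destruct G as [[Fd Fm] [[Gd Gm] _]].
  set (phi := fun x y => pdx_rel (f (sigma X x)) tt y).
  assert (Hphi : Qrel (qdeg X) (qdeg Y) phi).
  { intros x y. pose proof (pdx_isrel (f (sigma X x)) tt y) as H. unfold done in H. rewrite Fd in H. exact H. }
  assert (gtau : forall x y, px_rel (g (tau Y y)) x tt = phi x y).
  { intros x y. rewrite <- Y1, <- hom, Y2. reflexivity. }
  assert (fform : forall m y, pdx_rel (f m) tt y = PX_pre m (g (tau Y y))).
  { intros m y. rewrite <- Y2, hom. reflexivity. }
  assert (gform : forall l x, px_rel (g l) x tt = PdX_pre (f (sigma X x)) l).
  { intros l x. rewrite <- Y1, hom. reflexivity. }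
  exists phi. split; [split|split].
  - exact Hphi.
  - apply dist_sides.
    + intros x x' y.
      assert (E : qpre X x x' = PX_pre (sigma X x) (sigma X x')) by (rewrite Y1; reflexivity).
      rewrite E. eapply qle_trans; [apply cmpq_mono_r, Fm|].
      pose proof (PdX_ge (f (sigma X x)) (f (sigma X x')) y) as H. rewrite Fd in H. exact H.
    + intros x y y'.
      eapply qle_trans; [apply (rcomp_ge (qdeg Y) (qpre Y) (pdx_rel (f (sigma X x))) tt y' y) | apply pdx_dist].
  - intro m. split; [apply Fd|]. intros [] y. rewrite fform. unfold dist_up. apply qle_antisym.
    + apply lres_pt_le. apply px_isrel.
      pose proof (PX_DQ m (g (tau Y y))) as H. rewrite Gd in H. exact H.
      intro a. rewrite <- gtau. apply PX_ge.
    + apply PX_le. rewrite Gd. exact (lres_DQ (qdeg X) (done (px_deg m)) (qdeg Y) phi (px_rel m) tt y).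
      intro a. rewrite gtau. exact (lres_pt_ge (qdeg X) (done (px_deg m)) (qdeg Y) phi (px_rel m) a tt y (px_isrel m)).
  - intro l. split; [apply Gd|]. intros x []. rewrite gform. unfold dist_down. apply qle_antisym.
    + apply rres_pt_le. pose proof (PdX_DQ (f (sigma X x)) l) as H. rewrite Fd in H. exact H.
      intro c. apply PdX_ge.
    + apply PdX_le. rewrite Fd. exact (rres_DQ (qdeg X) (done (pdx_deg l)) (qdeg Y) (pdx_rel l) phi x tt).
      intro c. exact (rres_pt_ge (qdeg X) (done (pdx_deg l)) (qdeg Y) (pdx_rel l) phi x tt c).
Qed.

Lemma part2 {Q : Quantale} (X Y : QPO Q) (f : PX X -> PX Y) (g : PX Y -> PX X) :
  qgalois (@px_deg Q X) (@px_deg Q Y) (@PX_pre Q X) (@PX_pre Q Y) f g ->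
  exists phi : Y -> X -> Q, qdistributor phi /\
    (forall m, px_deg (f m) = px_deg m /\ forall y u, px_rel (f m) y u = dist_ustar phi m y u) /\
    (forall m, px_deg (g m) = px_deg m /\ forall x u, px_rel (g m) x u = dist_lstar phi m x u).
Proof.
  intro G.
  pose proof (hom_iso _ _ _ _ f g (EP_PX X) (EP_PX Y) G) as hom.
  destruct G as [[Fd Fm] [[Gd Gm] _]].
  set (phi := fun y x => px_rel (f (sigma X x)) y tt).
  assert (Hphi : Qrel (qdeg Y) (qdeg X) phi).
  { intros y x. pose proof (px_isrel (f (sigma X x)) y tt) as H. unfold done in H. rewrite Fd in H. exact H. }
  assert (sideA : forall y y' x, qle (cmpq (qdeg Y y') (phi y' x) (qpre Y y y')) (phi y x)).
  { intros y y' x. eapply qle_trans; [apply (rcomp_ge (qdeg Y) (px_rel (f (sigma X x))) (qpre Y) y y' tt) | apply px_dist]. }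
  assert (gform : forall n x, px_rel (g n) x tt = dist_lstar phi n x tt).
  { intros n x. rewrite <- Y1, <- hom. unfold dist_lstar. apply qle_antisym.
    - apply lres_pt_le. exact Hphi. pose proof (PX_DQ (f (sigma X x)) n) as H. rewrite Fd in H. exact H.
      intro y. pose proof (PX_ge (f (sigma X x)) n y) as H. rewrite Fd in H. exact H.
    - apply PX_le. rewrite Fd. exact (lres_DQ (qdeg Y) (qdeg X) (done (px_deg n)) (px_rel n) phi x tt).
      intro y. rewrite Fd. exact (lres_pt_ge (qdeg Y) (qdeg X) (done (px_deg n)) (px_rel n) phi y x tt Hphi). }
  exists phi. split; [split|split].
  - exact Hphi.
  - apply dist_sides. exact sideA.
    intros y x x'.
    assert (E : qpre X x' x = PX_pre (sigma X x') (sigma X x)) by (rewrite Y1; reflexivity).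
    rewrite E. eapply qle_trans; [apply cmpq_mono_l, Fm|].
    pose proof (PX_ge (f (sigma X x')) (f (sigma X x)) y) as H. rewrite Fd in H. exact H.
  - intro m. split; [apply Fd|]. intros y []. unfold dist_ustar. apply qle_antisym.
    + set (Cm := rcomp (qdeg X) (px_rel m) phi).
      pose proof (rcomp_DQ _ _ _ _ _ (px_isrel m) Hphi) as Ci.
      pose proof (rcomp_right_closed _ _ _ _ _ _ (px_isrel m) Hphi (qpre_rel (q:=Y)) sideA) as Cd.
      set (Cpx := {| px_deg := px_deg m; px_rel := Cm; px_isrel := Ci; px_dist := Cd |} : PX Y).
      assert (H1 : qle (px_deg m) (PX_pre m (g Cpx))).
      { apply PX_le. rewrite Gd. apply inDQ_refl.
        intro x. rewrite cmpq_id_l by exact (proj2 (px_isrel m x tt)). rewrite gform. unfold dist_lstar.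
        apply lres_pt_le. exact Hphi. exact (px_isrel m x tt).
        intro y'. apply (rcomp_ge (qdeg X) (px_rel m) phi y' x tt). }
      rewrite <- hom in H1.
      eapply qle_trans; [|apply (PX_ge (f m) Cpx y)].
      apply cmpq_unit_l. rewrite Fd. exact H1.
    + apply rcomp_le. intro x.
      assert (E := Y1 x m).
      eapply qle_trans; [apply (cmpq_mono_l _ _ (PX_pre (f (sigma X x)) (f m))); rewrite <- E; apply Fm|].
      pose proof (PX_ge (f (sigma X x)) (f m) y) as H. rewrite Fd in H. exact H.
  - intro n. split; [apply Gd|]. intros x []. apply gform.
Qed.

Lemma part3 {Q : Quantale} (X Y : QPO Q) (f : PdX X -> PdX Y) (g : PdX Y -> PdX X) :
  qgalois (@pdx_deg Q X) (@pdx_deg Q Y) (@PdX_pre Q X) (@PdX_pre Q Y) f g ->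
  exists phi : Y -> X -> Q, qdistributor phi /\
    (forall l, pdx_deg (f l) = pdx_deg l /\ forall u y, pdx_rel (f l) u y = dist_ldag phi l u y) /\
    (forall l, pdx_deg (g l) = pdx_deg l /\ forall u x, pdx_rel (g l) u x = dist_udag phi l u x).
Proof.
  intro G.
  pose proof (hom_iso _ _ _ _ f g (EP_PdX X) (EP_PdX Y) G) as hom.
  destruct G as [[Fd Fm] [[Gd Gm] _]].
  set (phi := fun y x => pdx_rel (g (tau Y y)) tt x).
  assert (Hphi : Qrel (qdeg Y) (qdeg X) phi).
  { intros y x. pose proof (pdx_isrel (g (tau Y y)) tt x) as H. unfold done in H. rewrite Gd in H. exact H. }
  assert (sideB : forall y x x', qle (cmpq (qdeg X x') (qpre X x' x) (phi y x')) (phi y x)).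
  { intros y x x'. eapply qle_trans; [apply (rcomp_ge (qdeg X) (qpre X) (pdx_rel (g (tau Y y))) tt x' x) | apply pdx_dist]. }
  assert (fform : forall l y, pdx_rel (f l) tt y = dist_ldag phi l tt y).
  { intros l y. rewrite <- Y2, hom. unfold dist_ldag. apply qle_antisym.
    - apply rres_pt_le. pose proof (PdX_DQ l (g (tau Y y))) as H. rewrite Gd in H. exact H.
      intro x. pose proof (PdX_ge l (g (tau Y y)) x) as H. rewrite Gd in H. exact H.
    - apply PdX_le. rewrite Gd. exact (rres_DQ (done (pdx_deg l)) (qdeg Y) (qdeg X) phi (pdx_rel l) tt y).
      intro x. rewrite Gd. exact (rres_pt_ge (done (pdx_deg l)) (qdeg Y) (qdeg X) phi (pdx_rel l) tt y x). }
  exists phi. split; [split|split].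
  - exact Hphi.
  - apply dist_sides; [|exact sideB].
    intros y y' x.
    assert (E : qpre Y y y' = PdX_pre (tau Y y) (tau Y y')) by (rewrite Y2; reflexivity).
    rewrite E. eapply qle_trans; [apply cmpq_mono_r, Gm|].
    pose proof (PdX_ge (g (tau Y y)) (g (tau Y y')) x) as H. rewrite Gd in H. exact H.
  - intro l. split; [apply Fd|]. intros [] y. apply fform.
  - intro l'. split; [apply Gd|]. intros [] x. unfold dist_udag. apply qle_antisym.
    + set (C := rcomp (qdeg Y) phi (pdx_rel l')).
      pose proof (rcomp_DQ _ _ _ _ _ Hphi (pdx_isrel l')) as Ci.
      pose proof (rcomp_left_closed _ _ _ _ _ (qpre X) Hphi (pdx_isrel l') sideB) as Cd.
      set (Cpd := {| pdx_deg := pdx_deg l'; pdx_rel := C; pdx_isrel := Ci; pdx_dist := Cd |} : PdX X).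
      assert (H1 : qle (pdx_deg l') (PdX_pre (f Cpd) l')).
      { apply PdX_le. rewrite Fd. apply inDQ_refl.
        intro y. rewrite cmpq_id_r by exact (proj1 (pdx_isrel l' tt y)). rewrite fform. unfold dist_ldag.
        apply rres_pt_le. exact (pdx_isrel l' tt y).
        intro x'. apply (rcomp_ge (qdeg Y) phi (pdx_rel l') tt y x'). }
      rewrite hom in H1.
      eapply qle_trans; [|apply (PdX_ge Cpd (g l') x)].
      apply cmpq_unit_r. exact (proj1 (pdx_isrel (g l') tt x)). rewrite Gd. exact H1.
    + apply rcomp_le. intro y.
      assert (E := Y2 y l').
      eapply qle_trans; [apply (cmpq_mono_r _ _ _ (PdX_pre (g l') (g (tau Y y)))); rewrite <- E; apply Gm|].
      pose proof (PdX_ge (g l') (g (tau Y y)) x) as H. rewrite Gd in H. exact H.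
Qed.

Theorem proposition4p23 (Q : Quantale) (X Y : QPO Q) :
  (* (1) Q-polarities *)
  (forall (f : PX X -> PdX Y) (g : PdX Y -> PX X),
     qgalois (@px_deg Q X) (@pdx_deg Q Y) (@PX_pre Q X) (@PdX_pre Q Y) f g ->
     exists phi : X -> Y -> Q, qdistributor phi /\
       (forall m, pdx_deg (f m) = px_deg m /\
          forall u y, pdx_rel (f m) u y = dist_up phi m u y) /\
       (forall l, px_deg (g l) = pdx_deg l /\
          forall x u, px_rel (g l) x u = dist_down phi l x u)) /\
  (* (2) Q-axialities *)
  (forall (f : PX X -> PX Y) (g : PX Y -> PX X),
     qgalois (@px_deg Q X) (@px_deg Q Y) (@PX_pre Q X) (@PX_pre Q Y) f g ->
     exists phi : Y -> X -> Q, qdistributor phi /\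
       (forall m, px_deg (f m) = px_deg m /\
          forall y u, px_rel (f m) y u = dist_ustar phi m y u) /\
       (forall m, px_deg (g m) = px_deg m /\
          forall x u, px_rel (g m) x u = dist_lstar phi m x u)) /\
  (* (3) dual Q-axialities *)
  (forall (f : PdX X -> PdX Y) (g : PdX Y -> PdX X),
     qgalois (@pdx_deg Q X) (@pdx_deg Q Y) (@PdX_pre Q X) (@PdX_pre Q Y) f g ->
     exists phi : Y -> X -> Q, qdistributor phi /\
       (forall l, pdx_deg (f l) = pdx_deg l /\
          forall u y, pdx_rel (f l) u y = dist_ldag phi l u y) /\
       (forall l, pdx_deg (g l) = pdx_deg l /\
          forall u x, pdx_rel (g l) u x = dist_udag phi l u x)).
Proof.
  split; [|split]; intros f g G; [exact (part1 X Y f g G) | exact (part2 X Y f g G) | exact (part3 X Y f g G)].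
Qed.
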